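(* Let $X$ be a complete CAT(0) space, $f:X\to(-\infty,\infty]$ a convex, proper, lower semicontinuous function, and $(\gamma_n)$ a sequence of positive reals. Then the family $(J_{\gamma_n})_{n\in\mathbb{N}}$ of resolvents of $f$ is jointly firmly nonexpansive with respect to $(\gamma_n)$.
   Context: A geodesic space $(X,d)$ is CAT(0) if for all $z\in X$, all geodesics $\gamma:[a,b]\to X$ and all $t\in[0,1]$, $d^2(z,\gamma((1-t)a+tb))\le(1-t)d^2(z,\gamma(a))+td^2(z,\gamma(b))-t(1-t)d^2(\gamma(a),\gamma(b))$; $(1-t)x+ty$ denotes the point at distance $t\,d(x,y)$ from $x$ on the unique geodesic from $x$ to $y$. For $\gamma>0$, the resolvent (proximal mapping) of $f$ of order $\gamma$ is $J_\gamma:X\to X$, $J_\gamma(x):=\arg\min_{y\in X}\left[f(y)+\frac1{2\gamma}d^2(x,y)\right]$ (the minimizer exists and is unique). $(T_n)$ is jointly firmly nonexpansive w.r.t. $(\gamma_n)$ if for all $n,m$, $x,y\in X$, $\alpha,\beta\in[0,1]$ with $(1-\alpha)\gamma_n=(1-\beta)\gamma_m$: $d(T_nx,T_my)\le d((1-\alpha)x+\alpha T_nx,(1-\beta)y+\beta T_my)$. *)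

(* Defs.v *)
From Stdlib Require Import ClassicalEpsilon.
From mathcomp Require Import all_boot all_order all_algebra.
From mathcomp Require Import reals ereal.
Set Implicit Arguments. Unset Strict Implicit. Unset Printing Implicit Defensive.
Import Order.TTheory GRing.Theory Num.Theory.
Local Open Scope ring_scope.

Section CAT0.
Variables (R : realType) (X : Type) (d : X -> X -> R).

Definition is_metric : Prop :=
  (forall x y, 0 <= d x y) /\ (forall x y, d x y = 0 <-> x = y) /\
  (forall x y, d x y = d y x) /\ (forall x y z, d x z <= d x y + d y z).

Definition complete_metric : Prop :=
  forall u : nat -> X,
    (forall eps, 0 < eps -> exists N, forall p q, (N <= p)%N -> (N <= q)%N ->
        d (u p) (u q) < eps) ->
    exists l, forall eps, 0 < eps -> exists N, forall p, (N <= p)%N -> d (u p) l < eps.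

Definition is_geodesic (g : R -> X) (a b : R) : Prop :=
  a <= b /\ forall s t, a <= s <= b -> a <= t <= b -> d (g s) (g t) = `|s - t|.

Definition geodesic_space : Prop :=
  forall x y, exists g : R -> X,
    is_geodesic g 0 (d x y) /\ g 0 = x /\ g (d x y) = y.

Definition CAT0_ineq : Prop :=
  forall (z : X) (g : R -> X) (a b : R), is_geodesic g a b ->
  forall t, 0 <= t <= 1 ->
    (d z (g ((1 - t) * a + t * b))) ^+ 2 <=
      (1 - t) * (d z (g a)) ^+ 2 + t * (d z (g b)) ^+ 2
      - t * (1 - t) * (d (g a) (g b)) ^+ 2.

Definition CAT0_space : Prop := is_metric /\ geodesic_space /\ CAT0_ineq.

(* (1-t)x + t y : the point at distance t d(x,y) from x on the (unique)
   geodesic from x to y, i.e. the point z with d x z = t d(x,y) and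
   d z y = (1-t) d(x,y) (unique in a CAT(0) space). *)
Definition geo_pt (x y : X) (t : R) : X :=
  epsilon (inhabits x)
    (fun z => d x z = t * d x y /\ d z y = (1 - t) * d x y).

Local Open Scope ereal_scope.

Definition no_minfty (f : X -> \bar R) : Prop := forall x, f x != -oo.

Definition proper_fun (f : X -> \bar R) : Prop :=
  no_minfty f /\ exists x, f x < +oo.

Definition convex_fun (f : X -> \bar R) : Prop :=
  forall x y (t : R), (0 <= t <= 1)%R ->
    f (geo_pt x y t) <= (1 - t)%:E * f x + t%:E * f y.

Definition lsc_fun (f : X -> \bar R) : Prop :=
  forall x (r : R), r%:E < f x ->
    exists eps : R, (0 < eps)%R /\ forall y, (d x y < eps)%R -> r%:E < f y.

(* resolvent J_gamma x := argmin_y [ f y + 1/(2 gamma) d(x,y)^2 ]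
   (the minimizer exists and is unique under the standing assumptions) *)
Definition resolvent (f : X -> \bar R) (gamma : R) (x : X) : X :=
  epsilon (inhabits x)
    (fun y => forall w, f y + ((2 * gamma)^-1 * (d x y) ^+ 2)%:E
                        <= f w + ((2 * gamma)^-1 * (d x w) ^+ 2)%:E).

Local Close Scope ereal_scope.

Definition jointly_firmly_nonexpansive (T : nat -> X -> X) (gam : nat -> R) : Prop :=
  forall (n m : nat) (x y : X) (alpha beta : R),
    0 <= alpha <= 1 -> 0 <= beta <= 1 ->
    (1 - alpha) * gam n = (1 - beta) * gam m ->
    d (T n x) (T m y) <= d (geo_pt x (T n x) alpha) (geo_pt y (T m y) beta).

End CAT0.

(* Main.v *)
Require Import Defs.
From Stdlib Require Import ClassicalEpsilon Classical.
From mathcomp Require Import all_boot all_order all_algebra.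
From mathcomp Require Import reals ereal.
From mathcomp Require Import classical_sets.
From mathcomp Require Import ring lra.
Set Implicit Arguments. Unset Strict Implicit. Unset Printing Implicit Defensive.
Import Order.TTheory GRing.Theory Num.Theory.
Local Open Scope ring_scope.
Section S.
Variables (R : realType) (X : Type) (d : X -> X -> R).
Hypothesis hC : CAT0_space d.

Lemma eqle (a b : R) : a = b -> a <= b. Proof. by move=> ->. Qed.
Lemma d_ge0 x y : 0 <= d x y. Proof. by case: hC => [[]]. Qed.
Lemma d_eq0 x y : d x y = 0 <-> x = y. Proof. by case: hC => [[_ []]]. Qed.
Lemma d_sym x y : d x y = d y x. Proof. by case: hC => [[_ [_ []]]]. Qed.
Lemma d_tri x y z : d x z <= d x y + d y z. Proof. by case: hC => [[_ [_ []]]]. Qed.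
Lemma d_xx x : d x x = 0. Proof. by apply/d_eq0. Qed.

Lemma cat0_pt x y t p z : 0 <= t <= 1 ->
  d x p = t * d x y -> d p y = (1 - t) * d x y ->
  d z p ^+ 2 <= (1 - t) * d z x ^+ 2 + t * d z y ^+ 2 - t * (1 - t) * d x y ^+ 2.
Proof.
move=> ht hxp hpy.
case: hC => _ [hg hcat].
have [g [hgeo [g0 gD]]] := hg x y.
have key : forall z, d z (g (t * d x y)) ^+ 2 <=
   (1 - t) * d z x ^+ 2 + t * d z y ^+ 2 - t * (1 - t) * d x y ^+ 2.
  move=> w; have := hcat w g 0 (d x y) hgeo t ht.
  by rewrite mulr0 add0r g0 gD.
have := key p; rewrite (d_sym p x) hxp hpy => h.
have h0 : d p (g (t * d x y)) ^+ 2 <= 0.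
  apply: le_trans h _; apply: eqle; ring.
have : d p (g (t * d x y)) = 0.
  apply/eqP; rewrite -sqrf_eq0 eq_le h0 sqr_ge0 //.
by move/d_eq0 => ->; apply: key.
Qed.

Lemma geo_spec x y t : 0 <= t <= 1 ->
  d x (geo_pt d x y t) = t * d x y /\ d (geo_pt d x y t) y = (1 - t) * d x y.
Proof.
move=> ht; rewrite /geo_pt; apply: (epsilon_spec (inhabits x) (fun z => d x z = t * d x y /\ d z y = (1 - t) * d x y)).
case: hC => _ [hg _]; have [g [[_ hgeo] [g0 gD]]] := hg x y.
have hD := d_ge0 x y.
have ht0 : 0 <= t * d x y <= d x y.
  apply/andP; split; first by apply: mulr_ge0; case/andP: ht.
  by apply: ler_piMl => //; case/andP: ht.
exists (g (t * d x y)); split.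
  have := hgeo 0 (t * d x y); rewrite g0 => ->; rewrite ?lexx ?hD ?ht0 //.
  by rewrite sub0r normrN ger0_norm //; case/andP: ht0.
have := hgeo (t * d x y) (d x y); rewrite gD => ->; rewrite ?lexx ?hD ?ht0 //.
rewrite distrC ger0_norm; first ring.
by rewrite subr_ge0; case/andP: ht0.
Qed.

Lemma cat0_geo x y t z : 0 <= t <= 1 ->
  d z (geo_pt d x y t) ^+ 2 <= (1 - t) * d z x ^+ 2 + t * d z y ^+ 2 - t * (1 - t) * d x y ^+ 2.
Proof. move=> ht; have [h1 h2] := geo_spec x y ht; exact: cat0_pt. Qed.

Lemma geo1 x y : geo_pt d x y 1 = y.
Proof.
have [_ h] := geo_spec x y (t:=1) (ltac:(by rewrite ler01 lexx)).
by apply/d_eq0; rewrite h subrr mul0r.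
Qed.

Lemma quad a b c e :
  d a c ^+ 2 + d b e ^+ 2 - d a e ^+ 2 - d b c ^+ 2 <= 2 * d a b * d c e.
Proof.
have [/d_eq0 ->|hA] := eqVneq (d a b) 0.
  by rewrite d_xx mulr0 mul0r; apply: eqle; ring.
have [/d_eq0 ->|hB] := eqVneq (d c e) 0.
  by rewrite d_xx mulr0; apply: eqle; ring.
set A := d a b; set B := d c e.
have A0 : 0 < A by rewrite lt_neqAle d_ge0 andbT eq_sym.
have B0 : 0 < B by rewrite lt_neqAle d_ge0 andbT eq_sym.
set t := A / (A + B).
have AB0 : 0 < A + B by rewrite addr_gt0.
have t0 : 0 < t by rewrite divr_gt0.
have t1 : 0 < 1 - t.
  by rewrite subr_gt0 /t ltr_pdivrMr // mul1r ltrDl.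
have ht : 0 <= t <= 1 by rewrite (ltW t0) /= -subr_ge0 ltW.
set m := geo_pt d a c t.
have h1 := cat0_geo a c b ht; have h2 := cat0_geo a c e ht.
rewrite -/m in h1 h2.
have tri : d b e <= d b m + d m e by apply: d_tri.
set u := d b m in h1 tri; set v := d m e in tri.
have h2' : v ^+ 2 <= (1 - t) * d a e ^+ 2 + t * d c e ^+ 2 - t * (1 - t) * d a c ^+ 2.
  by rewrite /v (d_sym m e) (d_sym a e) (d_sym c e).
have hbe : d b e ^+ 2 <= u ^+ 2 / t + v ^+ 2 / (1 - t).
  have := d_ge0 b e => he.
  apply: le_trans (_ : (u + v) ^+ 2 <= _).
    by rewrite ler_pXn2r // ?nnegrE // addr_ge0 // d_ge0.
  have : 0 <= (u * (1 - t) - v * t) ^+ 2 / (t * (1 - t)).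
    by rewrite divr_ge0 ?sqr_ge0 // mulr_ge0 // ltW.
  have tt : t + (1 - t) = 1 by ring.
  move=> H; rewrite -subr_ge0; apply: le_trans H _; apply: eqle.
  field; rewrite ?gt_eqF //; apply/andP; split; by rewrite gt_eqF.
rewrite (d_sym b a) -/A in h1.
have h1' : u ^+ 2 / t <= ((1 - t) * A ^+ 2 + t * d b c ^+ 2 - t * (1 - t) * d a c ^+ 2) / t.
  by rewrite ler_pM2r // invr_gt0.
have h2'' : v ^+ 2 / (1 - t) <= ((1 - t) * d a e ^+ 2 + t * B ^+ 2 - t * (1 - t) * d a c ^+ 2) / (1 - t).
  by rewrite ler_pM2r // invr_gt0.
have hsum := lerD h1' h2''.
have E : ((1 - t) * A ^+ 2 + t * d b c ^+ 2 - t * (1 - t) * d a c ^+ 2) / t +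
   ((1 - t) * d a e ^+ 2 + t * B ^+ 2 - t * (1 - t) * d a c ^+ 2) / (1 - t)
   = 2 * A * B + d b c ^+ 2 + d a e ^+ 2 - d a c ^+ 2.
  have e1 : 1 - t = B / (A + B) by rewrite /t; field; rewrite gt_eqF.
  rewrite e1 /t; field; rewrite !gt_eqF //=.
have := le_trans hbe (le_trans hsum (eqle E)).
move=> H; rewrite -subr_ge0; rewrite -subr_ge0 in H; apply: le_trans H _; apply: eqle; ring.
Qed.

Variable f : X -> \bar R.
Hypotheses (hconv : convex_fun d f) (hprop : proper_fun f) (hlsc : lsc_fun d f)
  (hcomp : complete_metric d).

Definition fin y := (f y < +oo)%E.
Definition fr y := fine (f y).

Lemma finE y : fin y -> f y = (fr y)%:E.
Proof. move: (proj1 hprop y); rewrite /fin /fr; case: (f y) => //. Qed.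

Lemma notfin y : ~ fin y -> f y = +oo%E.
Proof. move: (proj1 hprop y); rewrite /fin; case: (f y) => // r _ H; exfalso; apply: H; exact: ltry. Qed.

Lemma conv_real x y t : fin x -> fin y -> 0 <= t <= 1 ->
  fin (geo_pt d x y t) /\ fr (geo_pt d x y t) <= (1 - t) * fr x + t * fr y.
Proof.
move=> hx hy ht; have := hconv x y ht; rewrite (finE hx) (finE hy) => h.
have hf : fin (geo_pt d x y t).
  by rewrite /fin; apply: le_lt_trans h _; rewrite ltey.
split => //; move: h; rewrite (finE hf); exact.
Qed.

Definition minz u mu p := forall w,
  (f p + ((2 * mu)^-1 * (d u p) ^+ 2)%:E <= f w + ((2 * mu)^-1 * (d u w) ^+ 2)%:E)%E.

Lemma min_fin u mu p : minz u mu p -> fin p.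
Proof.
move=> h; have [_ [x0 hx0]] := hprop; have := h x0.
rewrite (finE (hx0 : fin x0)) /fin; move: (proj1 hprop p).
case: (f p) => [r0 _ _|_|//]; first exact: ltry.
by rewrite addye.
Qed.

Lemma min_real u mu p w : minz u mu p -> fin w ->
  fr p + (2 * mu)^-1 * (d u p) ^+ 2 <= fr w + (2 * mu)^-1 * (d u w) ^+ 2.
Proof.
move=> h hw; have := h w; rewrite (finE hw) (finE (min_fin h)); exact.
Qed.

Lemma real_min u mu p : fin p ->
  (forall w, fin w -> fr p + (2 * mu)^-1 * (d u p) ^+ 2 <= fr w + (2 * mu)^-1 * (d u w) ^+ 2) ->
  minz u mu p.
Proof.
move=> hp h w; have [hw|hw] := boolP (fin w).
  by rewrite (finE hw) (finE hp); exact: h.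
by rewrite (notfin (negP hw)) (finE hp) leey.
Qed.

Lemma lim0 (a b k : R) : 0 <= k -> (forall t, 0 < t <= 1 -> a <= b + t * k) -> a <= b.
Proof.
move=> k0 h; apply/ler_addgt0Pr => e e0.
set t := Num.min 1 (e / (k + 1)).
have k1 : 0 < k + 1 by rewrite ltr_wpDl.
have t0 : 0 < t by rewrite /t lt_min ltr01 divr_gt0.
have t1 : t <= 1 by rewrite /t ge_min lexx.
apply: le_trans (h t _) _; first by rewrite t0 t1.
rewrite lerD2l; apply: le_trans (_ : e / (k + 1) * k <= e).
  by rewrite ler_wpM2r // /t ge_min lexx orbT.
rewrite mulrAC ler_pdivrMr // ler_pM2l // lerDl ler01 //.
Qed.

Lemma varineq u mu p w : 0 < mu -> minz u mu p -> fin w ->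
  fr p - fr w <= (2 * mu)^-1 * (d u w ^+ 2 - d u p ^+ 2 - d p w ^+ 2).
Proof.
move=> mu0 hm hw; have hp := min_fin hm; set c := (2 * mu)^-1.
have c0 : 0 < c by rewrite invr_gt0 mulr_gt0.
apply: (@lim0 _ _ (c * d p w ^+ 2)); first by rewrite mulr_ge0 // ?sqr_ge0 // ltW.
move=> t /andP[t0 t1].
have ht : 0 <= t <= 1 by rewrite ltW.
have [hf hle] := conv_real hp hw ht.
have h1 := min_real hm hf.
have h2 := cat0_geo p w u ht.
have H : t * (fr p - fr w) <= t * (c * (d u w ^+ 2 - d u p ^+ 2 - d p w ^+ 2) + t * (c * d p w ^+ 2)).
  have h3 : c * d u (geo_pt d p w t) ^+ 2 <= c * ((1 - t) * d u p ^+ 2 + t * d u w ^+ 2 - t * (1 - t) * d p w ^+ 2).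
    by rewrite ler_pM2l.
  have := le_trans h1 (lerD hle h3).
  move=> H; rewrite -subr_ge0; rewrite -subr_ge0 in H; apply: le_trans H _; apply: eqle; rewrite /c; ring.
by rewrite ler_pM2l in H.
Qed.


Lemma nonexp u v mu p q : 0 < mu -> minz u mu p -> minz v mu q -> d p q <= d u v.
Proof.
move=> mu0 hp hq.
have h1 := varineq mu0 hp (min_fin hq).
have h2 := varineq mu0 hq (min_fin hp).
have c0 : 0 < (2 * mu)^-1 by rewrite invr_gt0 mulr_gt0.
have h3 := quad u v q p.
have H : 2 * d p q ^+ 2 <= d u q ^+ 2 + d v p ^+ 2 - d u p ^+ 2 - d v q ^+ 2.
  have := lerD h1 h2; rewrite -mulrDr => H.
  have : 0 <= (2 * mu)^-1 * (d u q ^+ 2 - d u p ^+ 2 - d p q ^+ 2 + (d v p ^+ 2 - d v q ^+ 2 - d q p ^+ 2)).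
    by apply: le_trans H; apply: eqle; ring.
  rewrite pmulr_rge0 // (d_sym q p) => H'.
  by rewrite -subr_ge0; apply: le_trans H' _; apply: eqle; ring.
have H2 : d p q * d p q <= d u v * d p q.
  rewrite -(@ler_pM2l _ 2) //; apply: le_trans H _; apply: le_trans h3 _.
  by rewrite (d_sym q p); apply: eqle; ring.
have [->|hpq] := eqVneq (d p q) 0; first exact: d_ge0.
have pq0 : 0 < d p q by rewrite lt_neqAle eq_sym hpq d_ge0.
by rewrite ler_pM2r in H2.
Qed.

Lemma resolv_id x lam alpha p q : 0 < lam -> 0 <= alpha < 1 ->
  minz x lam p -> minz (geo_pt d x p alpha) ((1 - alpha) * lam) q -> q = p.
Proof.
move=> l0 /andP[a0 a1] hp hq.
set u := geo_pt d x p alpha in hq.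
have ha : 0 <= alpha <= 1 by rewrite a0 ltW.
have [hxu hup] := geo_spec x p ha; rewrite -/u in hxu hup.
have b0 : 0 < 1 - alpha by rewrite subr_gt0.
have mu0 : 0 < (1 - alpha) * lam by rewrite mulr_gt0.
have h1 := varineq mu0 hq (min_fin hp).
have h2 := varineq l0 hp (min_fin hq).
set D := d x p in hxu hup h2 *.
set s := d u q in h1 *.
set e := d q p in h1.
have epq : d p q = e by rewrite /e d_sym.
rewrite epq in h2.
have H : 0 <= (d u p ^+ 2 - s ^+ 2 - e ^+ 2) + (1 - alpha) * (d x q ^+ 2 - D ^+ 2 - e ^+ 2).
  have H0 : fr q - fr p + (fr p - fr q) = 0 by ring.
  have := lerD h1 h2; rewrite H0 => H.
  have H' : 0 <= (2 * ((1 - alpha) * lam))^-1 * ((d u p ^+ 2 - s ^+ 2 - e ^+ 2) + (1 - alpha) * (d x q ^+ 2 - D ^+ 2 - e ^+ 2)).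
    apply: le_trans H _; apply: eqle; field.
    by rewrite !gt_eqF.
  by rewrite pmulr_rge0 // in H'; rewrite invr_gt0 !mulr_gt0.
have hxq : d x q <= alpha * D + s by rewrite -hxu; apply: d_tri.
have hxq2 : d x q ^+ 2 <= (alpha * D + s) ^+ 2.
  by rewrite ler_pXn2r // ?nnegrE ?d_ge0 // addr_ge0 ?d_ge0 // mulr_ge0 ?d_ge0.
have H2 : 0 <= - alpha * ((1 - alpha) * D - s) ^+ 2 - (2 - alpha) * e ^+ 2.
  apply: le_trans H _; rewrite hup.
  have : (1 - alpha) * d x q ^+ 2 <= (1 - alpha) * (alpha * D + s) ^+ 2 by rewrite ler_pM2l.
  move=> H3; rewrite -subr_ge0; rewrite -subr_ge0 in H3; apply: le_trans H3 _.
  apply: eqle; ring.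
have H4 : (2 - alpha) * e ^+ 2 <= 0.
  apply: le_trans (_ : (2 - alpha) * e ^+ 2 <= - alpha * ((1 - alpha) * D - s) ^+ 2) _.
    by rewrite -subr_ge0; apply: le_trans H2 _; apply: eqle; ring.
  by rewrite mulNr oppr_le0 mulr_ge0 // sqr_ge0.
have e0 : e ^+ 2 <= 0.
  by rewrite -(@ler_pM2l _ (2 - alpha)) ?mulr0 // subr_gt0 (lt_trans a1) // ltr1n.
apply/d_eq0; apply/eqP; rewrite -sqrf_eq0 eq_le e0 sqr_ge0 //.
Qed.


Lemma step_pt x0 : (forall K, 0 <= K -> exists y, (f y < (- K * (1 + d x0 y))%:E)%E) ->
  forall w B eps, fin w -> B <= 0 -> 0 < eps <= 1 ->
  exists w', fin w' /\ d w w' <= eps /\ fr w' <= B.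
Proof.
move=> hbad w B eps hw B0 /andP[e0 e1].
set A' := Num.max (fr w) 0.
have A'0 : 0 <= A' by rewrite /A' le_max lexx orbT.
have A'w : fr w <= A' by rewrite /A' le_max lexx.
set D := d w x0.
have D0 : 0 <= D by apply: d_ge0.
set K := (A' - B) * (1 + D) / eps.
have K0 : 0 <= K.
  by rewrite /K divr_ge0 ?(ltW e0) // mulr_ge0 // ?subr_ge0 ?(le_trans B0) // addr_ge0.
have [y hy] := hbad K K0.
set s := d x0 y in hy.
have s0 : 0 <= s by apply: d_ge0.
have hyf : fin y by rewrite /fin; apply: lt_trans hy (ltry _).
have hyr : fr y <= - K * (1 + s) by move: hy; rewrite (finE hyf) lte_fin => /ltW.
set P := 1 + D + s.
have P0 : 0 < P by rewrite /P; lra.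
set t := eps / P.
have t0 : 0 < t by rewrite divr_gt0.
have t1 : t <= 1.
  rewrite /t ler_pdivrMr // mul1r; apply: le_trans e1 _.
  by rewrite /P; lra.
have ht : 0 <= t <= 1 by rewrite ltW.
have [hf hle] := conv_real hw hyf ht.
exists (geo_pt d w y t); split => //; split.
  have [-> _] := geo_spec w y ht.
  have : d w y <= D + s by apply: d_tri.
  move=> H; apply: le_trans (_ : t * P <= eps).
    by rewrite ler_pM2l // /P; lra.
  by rewrite /t mulrAC -mulrA divff ?mulr1 // gt_eqF.
have E1 : t * (K * (1 + s)) = (A' - B) * ((1 + D) * (1 + s) / P).
  by rewrite /t /K; field; rewrite !gt_eqF.
have Q1 : 1 <= (1 + D) * (1 + s) / P.
  rewrite ler_pdivlMr // mul1r; rewrite /P.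
  have : 0 <= D * s by rewrite mulr_ge0.
  move=> H; rewrite -subr_ge0; apply: le_trans H _; apply: eqle; ring.
have Q2 : A' - B <= t * (K * (1 + s)).
  by rewrite E1 ler_peMr // subr_ge0 (le_trans B0).
apply: le_trans hle _.
have H1 : (1 - t) * fr w <= (1 - t) * A' by rewrite ler_wpM2l // subr_ge0.
have H2 : t * fr y <= t * (- K * (1 + s)) by rewrite ler_wpM2l // ltW.
have H3 : 0 <= t * A' by rewrite mulr_ge0 // ltW.
have H4 : t * (- K * (1 + s)) = - (t * (K * (1 + s))) by ring.
rewrite H4 in H2.
have H5 : (1 - t) * A' = A' - t * A' by ring.
rewrite H5 in H1.
lra.
Qed.

Definition E2 (n : nat) : R := ((expn 2 n)%:R)^-1.

Lemma E2_gt0 n : 0 < E2 n.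
Proof. by rewrite /E2 invr_gt0 ltr0n expn_gt0. Qed.

Lemma E2S n : E2 n = E2 n.+1 + E2 n.+1.
Proof.
rewrite /E2 expnS natrM -mulr2n -mulr_natr; field.
by rewrite pnatr_eq0 -lt0n expn_gt0.
Qed.

Lemma E2_small eps : 0 < eps -> exists N, E2 N < eps.
Proof.
move=> e0; exists (Num.bound (eps^-1)).
set N := Num.bound _.
have h1 : eps^-1 < N%:R by apply: archi_boundP; rewrite invr_ge0 ltW.
have h2 : (N%:R : R) < (expn 2 N)%:R by rewrite ltr_nat ltn_expl.
rewrite /E2 -(invrK eps) ltf_pV2 ?posrE ?invr_gt0 ?ltr0n ?expn_gt0 //.
exact: lt_trans h1 h2.
Qed.

Fixpoint wseq (g : X -> nat -> X) (x0 : X) (n : nat) : X :=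
  if n is n'.+1 then g (wseq g x0 n') n' else x0.

Lemma cauchy_seq (w : nat -> X) : (forall n, d (w n) (w n.+1) <= E2 n.+1) ->
  forall p k, d (w p) (w (p + k)%N) <= E2 p - E2 (p + k)%N.
Proof.
move=> h p; elim=> [|k IH]; first by rewrite addn0 d_xx subrr.
apply: le_trans (d_tri _ (w (p + k)%N) _) _.
rewrite addnS; apply: le_trans (lerD IH (h _)) _.
rewrite (E2S (p + k)); apply: eqle; ring.
Qed.

Lemma lin_lb x0 : fin x0 -> exists K, 0 <= K /\ forall y, ((- K * (1 + d x0 y))%:E <= f y)%E.
Proof.
move=> hx0; apply: NNPP => hno.
have hbad : forall K, 0 <= K -> exists y, (f y < (- K * (1 + d x0 y))%:E)%E.
  move=> K K0; apply: NNPP => hn; apply: hno; exists K; split => // y.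
  by rewrite leNgt; apply/negP => hy; apply: hn; exists y.
pose P w n w' := fin w -> fin w' /\ d w w' <= E2 n.+1 /\ fr w' <= - (n.+1)%:R.
pose g w n := epsilon (inhabits w) (P w n).
have hg : forall w n, P w n (g w n).
  move=> w n; apply: (epsilon_spec (inhabits w) (P w n)).
  have [hw|hw] := boolP (fin w).
    have hB : - (n.+1)%:R <= 0 :> R by rewrite oppr_le0.
    have hE : 0 < E2 n.+1 <= 1.
      by rewrite E2_gt0 /E2 invr_le1 ?ler1n ?expn_gt0 ?unitfE ?pnatr_eq0 -?lt0n ?expn_gt0.
    have [w' hw'] := step_pt hbad hw hB hE.
    by exists w' => _.
  by exists w => hw'; move: hw; rewrite hw'.
set w := wseq g x0.
have wfin : forall n, fin (w n).
  by elim=> [|n IH] //=; have [] := hg (w n) n IH.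
have wstep : forall n, d (w n) (w n.+1) <= E2 n.+1 /\ fr (w n.+1) <= - (n.+1)%:R.
  by move=> n; have [_ ] := hg (w n) n (wfin n).
have hc := cauchy_seq (fun n => proj1 (wstep n)).
have hc' : forall p q, (p <= q)%N -> d (w p) (w q) <= E2 p.
  move=> p q hpq; have := hc p (q - p)%N; rewrite subnKC // => H; apply: le_trans H _.
  by rewrite gerBl ltW // E2_gt0.
have [l hl] : exists l, forall eps, 0 < eps -> exists N, forall p, (N <= p)%N -> d (w p) l < eps.
  apply: hcomp => eps e0.
  have e2 : 0 < eps / 2 by rewrite divr_gt0.
  have [N hN] := E2_small e2.
  exists N => p q hp hq.
  apply: le_lt_trans (d_tri _ (w N) _) _.
  rewrite d_sym; apply: le_lt_trans (lerD (hc' _ _ hp) (hc' _ _ hq)) _.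
  lra.
have hr : ((fr l - 1)%:E < f l)%E.
  move: (proj1 hprop l); rewrite /fr; case: (f l) => [r _| _ |//].
    by rewrite lte_fin ltrBlDr ltrDl ltr01.
  exact: ltry.
have [eps [e0 heps]] := hlsc hr.
have [N hN] := hl eps e0.
have [M hM] : exists M : nat, 1 - fr l < M%:R.
  exists (Num.bound (Num.max (1 - fr l) 0)).
  apply: le_lt_trans (archi_boundP _); first by rewrite le_max lexx.
  by rewrite le_max lexx orbT.
set p := maxn N M.
have hd : d l (w p.+1) < eps by rewrite d_sym; apply: hN; rewrite (leq_trans (leq_maxl N M)).
have := heps (w p.+1) hd; rewrite (finE (wfin _)) lte_fin => H1.
have [_ H2] := wstep p.
have H3 : (M%:R : R) <= p%:R by rewrite ler_nat leq_maxr.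
have H4 : (p%:R : R) <= (p.+1)%:R by rewrite ler_nat.
clear -H1 H2 H3 H4 hM; lra.
Qed.

Lemma E2_le m n : (m <= n)%N -> E2 n <= E2 m.
Proof.
move=> h; rewrite /E2 lef_pV2 ?posrE ?ltr0n ?expn_gt0 // ler_nat leq_pexp2l //.
Qed.

Lemma ex_gap (r : R) (z : \bar R) : (r%:E < z)%E -> exists r', r < r' /\ (r'%:E < z)%E.
Proof.
case: z => [s| |] //.
  rewrite lte_fin => h; exists ((r + s) / 2); split.
    by rewrite ltr_pdivlMr //; lra.
  by rewrite lte_fin ltr_pdivrMr //; lra.
by move=> _; exists (r + 1); split; [lra | exact: ltry].
Qed.

Lemma exists_min u mu : 0 < mu -> exists p, minz u mu p.
Proof.
move=> mu0.
have [_ [x0 hx0']] := hprop; have hx0 : fin x0 := hx0'.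
have [K [K0 hK]] := lin_lb hx0.
set c := (2 * mu)^-1.
have c0 : 0 < c by rewrite invr_gt0 mulr_gt0.
pose Fr y := fr y + c * d u y ^+ 2.
set M0 := - K * (1 + d x0 u) - K ^+ 2 / (4 * c).
have hM0 : forall y, fin y -> M0 <= Fr y.
  move=> y hy; have := hK y; rewrite (finE hy) lee_fin => h.
  have t1 : d x0 y <= d x0 u + d u y by apply: d_tri.
  set s := d u y in t1 *.
  have s0 : 0 <= s by apply: d_ge0.
  have q : 0 <= c * s ^+ 2 - K * s + K ^+ 2 / (4 * c).
    have -> : c * s ^+ 2 - K * s + K ^+ 2 / (4 * c) = (2 * c * s - K) ^+ 2 / (4 * c).
      by field; rewrite gt_eqF.
    by rewrite divr_ge0 ?sqr_ge0 // mulr_ge0 // ltW.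
  have t2 : K * d x0 y <= K * (d x0 u + s) by rewrite ler_wpM2l.
  rewrite /Fr /M0 -/s; clear -h q t2; lra.
pose S : set R := fun r => exists y, fin y /\ Fr y <= r.
have hS : has_inf S.
  split; first by exists (Fr x0), x0.
  by exists M0 => r [y [hy hr]]; apply: le_trans (hM0 y hy) hr.
set L := inf S.
have hLb : forall y, fin y -> L <= Fr y.
  by move=> y hy; apply: (ge_inf hS.2); exists y.
have hadh : forall n, exists y, fin y /\ Fr y < L + E2 n.
  move=> n; have [r [y [hy hyr]] hr] := inf_adherent (E2_gt0 n) hS.
  by exists y; split => //; apply: le_lt_trans hyr hr.
pose z n := epsilon (inhabits x0) (fun y => fin y /\ Fr y < L + E2 n).
have hz : forall n, fin (z n) /\ Fr (z n) < L + E2 n.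
  by move=> n; apply: (epsilon_spec (inhabits x0) (fun y => fin y /\ Fr y < L + E2 n)).
have mid : forall p q, c / 4 * d (z p) (z q) ^+ 2 < (E2 p + E2 q) / 2.
  move=> p q; have [hp hFp] := hz p; have [hq hFq] := hz q.
  have ht : 0 <= (2^-1 : R) <= 1 by rewrite invr_ge0 ler0n invr_le1 ?ler1n ?unitfE.
  have [hf hle] := conv_real hp hq ht.
  have h2 := cat0_geo (z p) (z q) u ht.
  have hL := hLb _ hf.
  have h3 := ler_wpM2l (ltW c0) h2.
  move: hL h3 hle hFp hFq; rewrite /Fr; set m := geo_pt _ _ _ _.
  move=> hL h3 hle hFp hFq.
  have E : c * ((1 - 2^-1) * d u (z p) ^+ 2 + 2^-1 * d u (z q) ^+ 2 -
     2^-1 * (1 - 2^-1) * d (z p) (z q) ^+ 2) = 2^-1 * (c * d u (z p) ^+ 2) + 2^-1 * (c * d u (z q) ^+ 2) - 4^-1 * (c * d (z p) (z q) ^+ 2).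
    by field.
  rewrite E in h3.
  have E2' : c / 4 * d (z p) (z q) ^+ 2 = 4^-1 * (c * d (z p) (z q) ^+ 2) by field.
  rewrite E2'.
  have E3 : (1 - 2^-1) * fr (z p) = 2^-1 * fr (z p) :> R by field.
  rewrite E3 in hle.
  clear -hL h3 hle hFp hFq; lra.
have [l hl] : exists l, forall eps, 0 < eps -> exists N, forall p, (N <= p)%N -> d (z p) l < eps.
  apply: hcomp => eps e0.
  have ce : 0 < c * eps ^+ 2 / 4 by rewrite divr_gt0 // mulr_gt0 // exprn_gt0.
  have [N hN] := E2_small ce.
  exists N => p q hp hq.
  have h1 := mid p q; have hp' := E2_le hp; have hq' := E2_le hq.
  have h2 : c / 4 * d (z p) (z q) ^+ 2 < c / 4 * eps ^+ 2.
    apply: lt_le_trans h1 _.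
    have -> : c / 4 * eps ^+ 2 = c * eps ^+ 2 / 4 by field.
    clear -hN hp' hq'; lra.
  rewrite ltr_pM2l ?divr_gt0 // in h2.
  by rewrite -(@ltr_pXn2r _ 2) ?nnegrE ?d_ge0 ?(ltW e0).
have key : (f l <= (L - c * d u l ^+ 2)%:E)%E.
  rewrite leNgt; apply/negP => hlt.
  have [r' [hr' hr'f]] := ex_gap hlt.
  set eta := r' - (L - c * d u l ^+ 2).
  have eta0 : 0 < eta by rewrite /eta subr_gt0.
  have [e1 [e10 he1]] := hlsc hr'f.
  set B := 2 * d u l + 3.
  have B0 : 0 < B by rewrite /B; have := d_ge0 u l; lra.
  set rho := Num.min 1 (Num.min e1 (eta / (2 * c * B))).
  have rho0 : 0 < rho by rewrite /rho !lt_min ltr01 e10 divr_gt0 // !mulr_gt0.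
  have [N1 hN1] := hl rho rho0.
  have eta2 : 0 < eta / 2 by rewrite divr_gt0.
  have [N2 hN2] := E2_small eta2.
  set n := maxn N1 N2.
  have hd := hN1 n (leq_maxl _ _).
  set del := d (z n) l in hd.
  have del0 : 0 <= del by apply: d_ge0.
  have dl1 : del < 1 by move: hd; rewrite /rho !lt_min => /andP[].
  have dle1 : del < e1 by move: hd; rewrite /rho !lt_min => /and3P[].
  have dle2 : del < eta / (2 * c * B) by move: hd; rewrite /rho !lt_min => /and3P[].
  have [hzf hzF] := hz n.
  have hE := E2_le (leq_maxr N1 N2 : (N2 <= n)%N).
  have hdl : d l (z n) < e1 by rewrite d_sym.
  have hf1 := he1 (z n) hdl.
  rewrite (finE hzf) lte_fin in hf1.
  set a := d u (z n) in hzF.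
  have a0 : 0 <= a by apply: d_ge0.
  have t1 : d u l <= a + del by apply: d_tri.
  have t2 : a <= d u l + del by rewrite /a /del (d_sym (z n) l); apply: d_tri.
  have F1 : d u l ^+ 2 <= a ^+ 2 + B * del.
    have s1 : d u l ^+ 2 <= (a + del) ^+ 2.
      by rewrite ler_pXn2r ?nnegrE ?d_ge0 ?addr_ge0.
    have s2 : a * del <= (d u l + del) * del by rewrite ler_wpM2r.
    have s3 : del * del <= del by rewrite ler_piMl // ltW.
    apply: le_trans s1 _; rewrite /B.
    have -> : (a + del) ^+ 2 = a ^+ 2 + 2 * (a * del) + del * del by ring.
    have -> : (2 * d u l + 3) * del = 2 * (d u l * del) + 3 * del by ring.
    have e3 : (d u l + del) * del = d u l * del + del * del by ring.
    rewrite e3 in s2.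
    clear -s2 s3; lra.
  have F2 : c * (d u l ^+ 2) <= c * (a ^+ 2) + c * (B * del).
    by rewrite -mulrDr ler_pM2l.
  have F3 : c * (B * del) < eta / 2.
    have -> : eta / 2 = c * (B * (eta / (2 * c * B))) by field; rewrite !gt_eqF.
    by rewrite ltr_pM2l // ltr_pM2l.
  move: hzF; rewrite /Fr -/a => hzF.
  rewrite /eta in hr' eta0 eta2 F3.
  rewrite /eta in hN2.
  clear -hf1 hzF hE hN2 F2 F3; lra.
have hlf : fin l by rewrite /fin; apply: le_lt_trans key (ltry _).
have hFl : Fr l <= L.
  by move: key; rewrite (finE hlf) lee_fin /Fr => ?; lra.
exists l; apply: real_min => // w hw.
by apply: le_trans hFl (hLb w hw).
Qed.

Lemma resolvent_min u mu : 0 < mu -> minz u mu (resolvent d f mu u).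
Proof.
move=> mu0; exact: (epsilon_spec (inhabits u) (minz u mu) (exists_min u mu0)).
Qed.

End S.

Unset Implicit Arguments.

Theorem proposition3p17 (R : realType) (X : Type) (d : X -> X -> R)
  (f : X -> \bar R) (gam : nat -> R) :
  CAT0_space d -> complete_metric d ->
  convex_fun d f -> proper_fun f -> lsc_fun d f ->
  (forall n, 0 < gam n) ->
  jointly_firmly_nonexpansive d (fun n => resolvent d f (gam n)) gam.
Proof.
move=> hC hcomp hconv hprop hlsc hgam n m x y alpha beta ha hb heq.
set p := resolvent d f (gam n) x; set q := resolvent d f (gam m) y.
have hp : minz d f x (gam n) p by apply: resolvent_min.
have hq : minz d f y (gam m) q by apply: resolvent_min.
have [a1|a1] := eqVneq alpha 1.
  have b1 : beta = 1.
    move: heq; rewrite a1 subrr mul0r => /esym/eqP; rewrite mulf_eq0 subr_eq0.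
    by rewrite (gt_eqF (hgam m)) orbF => /eqP <-.
  by rewrite a1 b1 !geo1.
have [b1|b1] := eqVneq beta 1.
  have a1' : (1 == alpha) = false by rewrite eq_sym (negbTE a1).
  by move: heq; rewrite b1 subrr mul0r => /eqP; rewrite mulf_eq0 subr_eq0 a1' (gt_eqF (hgam n)).
have alt1 : alpha < 1 by rewrite lt_neqAle a1; case/andP: ha.
have blt1 : beta < 1 by rewrite lt_neqAle b1; case/andP: hb.
set mu := (1 - alpha) * gam n.
have mu0 : 0 < mu by rewrite mulr_gt0 // subr_gt0.
have hp' : minz d f (geo_pt d x p alpha) mu p.
  have hr := resolvent_min hC hconv hprop hlsc hcomp (geo_pt d x p alpha) mu0.
  have hra : 0 <= alpha < 1 by rewrite alt1; case/andP: ha => ->.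
  by move: (hr); rewrite (resolv_id hC hconv hprop (hgam n) hra hp hr).
have hq' : minz d f (geo_pt d y q beta) mu q.
  have mu0' : 0 < (1 - beta) * gam m by rewrite -heq.
  have hr := resolvent_min hC hconv hprop hlsc hcomp (geo_pt d y q beta) mu0'.
  have hrb : 0 <= beta < 1 by rewrite blt1; case/andP: hb => ->.
  by rewrite /mu heq; move: (hr); rewrite (resolv_id hC hconv hprop (hgam m) hrb hq hr).
exact: (nonexp hC hconv hprop mu0 hp' hq').
Qed.
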